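(* There are no semi-real quaternionic rectifying curves lying fully in $\mathcal{Q}_v$ whose curvatures $\kappa(s)$, $k(s)$ and $(r-\varepsilon_t\varepsilon_T\varepsilon_{N_1}\kappa)(s)$ are all non-zero constants.
   Context: $\mathcal{Q}_v$ denotes the semi-real quaternions, identified with the semi-Euclidean space $\mathbb{R}^4_2$ with inner product $h(p,q)=p_1q_1+p_2q_2-p_3q_3-p_4q_4$. For a unit speed semi-real quaternionic curve $\beta$ (i.e. $h(T,T)=\varepsilon_T=\pm1$, $T=\beta'$) with non-null Serret–Frenet frame $\{T,N_1,N_2,N_3\}$ the Frenet equations are $T'=\varepsilon_{N_1}\kappa N_1$, $N_1'=-\varepsilon_t\varepsilon_{N_1}\kappa T+\varepsilon_{n_1}kN_2$, $N_2'=-\varepsilon_t kN_1+\varepsilon_{n_1}(r-\varepsilon_t\varepsilon_T\varepsilon_{N_1}\kappa)N_3$, $N_3'=-\varepsilon_{n_2}(r-\varepsilon_t\varepsilon_T\varepsilon_{N_1}\kappa)N_2$, where $\kappa$ is the principal curvature of $\beta$, $k$ and $r$ are the curvature and torsion of the associated spatial quaternionic curve in $\mathbb{R}^3_1$ with frame signs $\varepsilon_t,\varepsilon_{n_1},\varepsilon_{n_2}\in\{\pm1\}$, and $h(N_1,N_1)=\varepsilon_{N_1}$, $h(N_2,N_2)=\varepsilon_{n_1}\varepsilon_T$, $h(N_3,N_3)=\varepsilon_{n_2}\varepsilon_T$. $\beta$ is a semi-real quaternionic rectifying curve if $\beta(s)=\lambda(s)T(s)+\mu(s)N_2(s)+\nu(s)N_3(s)$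 for some differentiable functions $\lambda,\mu,\nu$. *)

(* Defs.v *)
From Stdlib Require Import Reals.
From Coquelicot Require Import Coquelicot.
Open Scope R_scope.

(* The semi-real quaternions Q_v, identified with R^4_2. *)
Record V4 := mkV4 { c1 : R; c2 : R; c3 : R; c4 : R }.

Definition h (p q : V4) : R :=
  c1 p * c1 q + c2 p * c2 q - c3 p * c3 q - c4 p * c4 q.

Definition vadd (p q : V4) : V4 :=
  mkV4 (c1 p + c1 q) (c2 p + c2 q) (c3 p + c3 q) (c4 p + c4 q).
Definition vscal (a : R) (p : V4) : V4 :=
  mkV4 (a * c1 p) (a * c2 p) (a * c3 p) (a * c4 p).

Definition is_sign (e : R) : Prop := e = 1 \/ e = -1.

Definition in_I (a b : Rbar) (s : R) : Prop := Rbar_lt a s /\ Rbar_lt s b.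

Definition is_derive4 (f : R -> V4) (s : R) (f' : V4) : Prop :=
  is_derive (fun t => c1 (f t)) s (c1 f') /\
  is_derive (fun t => c2 (f t)) s (c2 f') /\
  is_derive (fun t => c3 (f t)) s (c3 f') /\
  is_derive (fun t => c4 (f t)) s (c4 f').

(* The data of a unit speed semi-real quaternionic curve beta on I with a
   non-null Serret–Frenet frame {T,N1,N2,N3}, principal curvature kappa,
   and curvature k and torsion r of the associated spatial quaternionic
   curve, with frame signs eT, eN1, et, en1, en2. *)
Definition semi_real_frenet_curve (a b : Rbar)
    (beta T N1 N2 N3 : R -> V4) (kappa k r : R -> R)
    (eT eN1 et en1 en2 : R) : Prop :=
  is_sign eT /\ is_sign eN1 /\ is_sign et /\ is_sign en1 /\ is_sign en2 /\
  forall s, in_I a b s ->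
    is_derive4 beta s (T s) /\
    h (T s) (T s) = eT /\
    h (N1 s) (N1 s) = eN1 /\
    h (N2 s) (N2 s) = en1 * eT /\
    h (N3 s) (N3 s) = en2 * eT /\
    h (T s) (N1 s) = 0 /\ h (T s) (N2 s) = 0 /\ h (T s) (N3 s) = 0 /\
    h (N1 s) (N2 s) = 0 /\ h (N1 s) (N3 s) = 0 /\ h (N2 s) (N3 s) = 0 /\
    is_derive4 T s (vscal (eN1 * kappa s) (N1 s)) /\
    is_derive4 N1 s
      (vadd (vscal (- et * eN1 * kappa s) (T s)) (vscal (en1 * k s) (N2 s))) /\
    is_derive4 N2 s
      (vadd (vscal (- et * k s) (N1 s))
            (vscal (en1 * (r s - et * eT * eN1 * kappa s)) (N3 s))) /\
    is_derive4 N3 s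
      (vscal (- en2 * (r s - et * eT * eN1 * kappa s)) (N2 s)).

Definition rectifying (a b : Rbar) (beta T N2 N3 : R -> V4)
    (lambda mu nu : R -> R) : Prop :=
  forall s, in_I a b s ->
    ex_derive lambda s /\ ex_derive mu s /\ ex_derive nu s /\
    beta s = vadd (vscal (lambda s) (T s))
                  (vadd (vscal (mu s) (N2 s)) (vscal (nu s) (N3 s))).

(* Main.v *)
Require Import Defs.
From Stdlib Require Import Reals Lra.
From Coquelicot Require Import Coquelicot.
Open Scope R_scope.

Lemma loc_eq (a b : Rbar) (f g : R -> R) s l m :
  in_I a b s -> (forall t, in_I a b t -> f t = g t) ->
  is_derive f s l -> is_derive g s m -> l = m.
Proof.
  intros Hs Hfg Hf Hg.
  assert (Hl : locally s (in_I a b)).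
  { apply (open_and (fun u : R => Rbar_lt a u) (fun u : R => Rbar_lt u b)
      (open_Rbar_gt a) (open_Rbar_lt b)); exact Hs. }
  assert (Hg' : is_derive g s l).
  { apply (is_derive_ext_loc f g s l); [|exact Hf].
    apply (filter_imp (in_I a b)); [|exact Hl]. intros t Ht; apply Hfg, Ht. }
  rewrite <- (is_derive_unique g s l Hg'). apply is_derive_unique; exact Hg.
Qed.

Lemma loc_c (a b : Rbar) (f : R -> R) c s (l : R) :
  in_I a b s -> (forall t, in_I a b t -> f t = c) -> is_derive f s l -> l = 0.
Proof. intros Hs Hf Hd. exact (loc_eq a b f (fun _ => c) s l 0 Hs Hf Hd (is_derive_const c s)). Qed.

Lemma mult_d (f g : R -> R) s df dg :
  is_derive f s df -> is_derive g s dg ->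
  is_derive (fun t => f t * g t) s (df * g s + f s * dg).
Proof.
  intros Hf Hg. apply (is_derive_mult f g s df dg Hf Hg). intros; apply Rmult_comm.
Qed.

Lemma h_deriv (f g : R -> V4) s f' g' :
  is_derive4 f s f' -> is_derive4 g s g' ->
  is_derive (fun t => h (f t) (g t)) s (h f' (g s) + h (f s) g').
Proof.
  intros [F1 [F2 [F3 F4]]] [G1 [G2 [G3 G4]]].
  unfold h.
  assert (H := is_derive_minus _ _ s _ _
    (is_derive_minus _ _ s _ _
      (is_derive_plus _ _ s _ _ (mult_d _ _ s _ _ F1 G1) (mult_d _ _ s _ _ F2 G2))
      (mult_d _ _ s _ _ F3 G3)) (mult_d _ _ s _ _ F4 G4)).
  simpl in H. unfold h.
  match goal with |- is_derive _ _ ?v => replace v with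
    (Defs.c1 f' * Defs.c1 (g s) + Defs.c1 (f s) * Defs.c1 g' + (c2 f' * c2 (g s) + c2 (f s) * c2 g') -
     (c3 f' * c3 (g s) + c3 (f s) * c3 g') - (c4 f' * c4 (g s) + c4 (f s) * c4 g')) by ring end.
  unfold minus, plus, opp in H; simpl in H. exact H.
Qed.

Lemma h_add_r p q w : h p (vadd q w) = h p q + h p w.
Proof. unfold h, vadd; simpl; ring. Qed.
Lemma h_scal_r p a q : h p (vscal a q) = a * h p q.
Proof. unfold h, vscal; simpl; ring. Qed.
Lemma h_add_l p q w : h (vadd q w) p = h q p + h w p.
Proof. unfold h, vadd; simpl; ring. Qed.
Lemma h_scal_l p a q : h (vscal a q) p = a * h q p.
Proof. unfold h, vscal; simpl; ring. Qed.
Lemma h_sym p q : h p q = h q p.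
Proof. unfold h; ring. Qed.

Lemma exI (a b : Rbar) : Rbar_lt a b -> exists s, in_I a b s.
Proof.
  intros H; unfold in_I; destruct a as [x| |], b as [y| |]; simpl in H; try contradiction.
  - exists ((x+y)/2); simpl; split; lra.
  - exists (x+1); simpl; split; lra.
  - exists (y-1); simpl; split; lra.
  - exists 0; simpl; split; exact I.
Qed.

Lemma sq1 e : is_sign e -> e * e = 1.
Proof. intros [-> | ->]; ring. Qed.

Theorem corollary4p1 :
  forall (a b : Rbar) (beta T N1 N2 N3 : R -> V4) (kappa k r : R -> R)
         (eT eN1 et en1 en2 : R) (lambda mu nu : R -> R)
         (C0 C1 C2 : R),
    Rbar_lt a b ->
    semi_real_frenet_curve a b beta T N1 N2 N3 kappa k r eT eN1 et en1 en2 ->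
    rectifying a b beta T N2 N3 lambda mu nu ->
    C0 <> 0 -> C1 <> 0 -> C2 <> 0 ->
    (forall s, in_I a b s ->
       kappa s = C0 /\ k s = C1 /\ r s - et * eT * eN1 * kappa s = C2) ->
    False.
Proof.
  intros a b beta T N1 N2 N3 kappa k r eT eN1 et en1 en2 lambda mu nu C0 C1 C2
    Hab [sT [sN1 [st [sn1 [sn2 HF]]]]] Hrect H0 H1 H2 HC.
  set (A := fun t => h (beta t) (T t)).
  set (B := fun t => h (beta t) (N1 t)).
  set (Cq := fun t => h (beta t) (N2 t)).
  set (D := fun t => h (beta t) (N3 t)).
  assert (eT2 := sq1 _ sT). assert (eN12 := sq1 _ sN1). assert (et2 := sq1 _ st).
  assert (en12 := sq1 _ sn1). assert (en22 := sq1 _ sn2).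
  assert (dA : forall s, in_I a b s -> is_derive A s (eT + eN1 * C0 * B s)).
  { intros s Hs. destruct (HF s Hs) as (Db & hTT & _ & _ & _ & _ & _ & _ & _ & _ & _ & DT & _).
    destruct (HC s Hs) as (E0 & E1 & E2).
    assert (X := h_deriv _ _ s _ _ Db DT). unfold A, B.
    rewrite h_scal_r, hTT, E0 in X. exact X. }
  assert (dB : forall s, in_I a b s ->
     is_derive B s (- et * eN1 * C0 * A s + en1 * C1 * Cq s)).
  { intros s Hs. destruct (HF s Hs) as (Db & _ & _ & _ & _ & hTN1 & _ & _ & _ & _ & _ & _ & DN1 & _).
    destruct (HC s Hs) as (E0 & E1 & E2).
    assert (X := h_deriv _ _ s _ _ Db DN1). unfold A, B, Cq.
    rewrite h_add_r, !h_scal_r, hTN1, E0, E1 in X.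
    replace (- et * eN1 * C0 * h (beta s) (T s) + en1 * C1 * h (beta s) (N2 s))
      with (0 + (- et * eN1 * C0 * h (beta s) (T s) + en1 * C1 * h (beta s) (N2 s))) by ring.
    exact X. }
  assert (dC : forall s, in_I a b s -> is_derive Cq s (en1 * C2 * D s)).
  { intros s Hs. destruct (HF s Hs) as (Db & _ & _ & _ & _ & _ & hTN2 & _ & _ & _ & _ & _ & _ & DN2 & _).
    destruct (HC s Hs) as (E0 & E1 & E2).
    assert (X := h_deriv _ _ s _ _ Db DN2). unfold Cq, D, B.
    rewrite h_add_r, !h_scal_r, hTN2, E2 in X.
    assert (Hb : B s = 0).
    { destruct (Hrect s Hs) as (_ & _ & _ & Eb). unfold B. rewrite Eb.
      destruct (HF s Hs) as (_ & _ & _ & _ & _ & hTN1 & _ & _ & hN12 & _).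
      rewrite !h_add_l, !h_scal_l, hTN1, (h_sym (N2 s)), hN12, (h_sym (N3 s)).
      destruct (HF s Hs) as (_ & _ & _ & _ & _ & _ & _ & _ & _ & hN13 & _).
      rewrite hN13; ring. }
    unfold B in Hb. rewrite Hb in X.
    replace (en1 * C2 * h (beta s) (N3 s))
      with (0 + (- et * k s * 0 + en1 * C2 * h (beta s) (N3 s))) by ring.
    exact X. }
  assert (dD : forall s, in_I a b s -> is_derive D s (- en2 * C2 * Cq s)).
  { intros s Hs. destruct (HF s Hs) as (Db & _ & _ & _ & _ & _ & _ & hTN3 & _ & _ & _ & _ & _ & _ & DN3).
    destruct (HC s Hs) as (E0 & E1 & E2).
    assert (X := h_deriv _ _ s _ _ Db DN3). unfold Cq, D.
    rewrite !h_scal_r, hTN3, E2 in X.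
    replace (- en2 * C2 * h (beta s) (N2 s))
      with (0 + - en2 * C2 * h (beta s) (N2 s)) by ring.
    exact X. }
  assert (Bz : forall s, in_I a b s -> B s = 0).
  { intros s Hs. destruct (Hrect s Hs) as (_ & _ & _ & Eb). unfold B. rewrite Eb.
    destruct (HF s Hs) as (_ & _ & _ & _ & _ & hTN1 & _ & _ & hN12 & hN13 & _).
    rewrite !h_add_l, !h_scal_l, hTN1, (h_sym (N2 s)), hN12, (h_sym (N3 s)), hN13; ring. }
  set (al := en1 * et * eN1 * C0 / C1).
  assert (CqA : forall s, in_I a b s -> Cq s = al * A s).
  { intros s Hs.
    assert (E := loc_c a b B 0 s _ Hs Bz (dB s Hs)).
    simpl in E. unfold al. field_simplify_eq; [|exact H1].
    apply (Rmult_eq_reg_l en1); [|destruct sn1 as [-> | ->]; lra].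
    replace (en1 * (Cq s * C1)) with (en1 * C1 * Cq s) by ring.
    replace (en1 * (en1 * et * eN1 * C0 * A s)) with ((en1*en1) * et * eN1 * C0 * A s) by ring.
    rewrite en12. lra. }
  assert (DC : forall s, in_I a b s -> en1 * C2 * D s = al * eT).
  { intros s Hs.
    assert (dA' : is_derive (fun t => al * A t) s (al * eT)).
    { assert (X := dA s Hs). rewrite (Bz s Hs) in X.
      replace (al * eT) with (al * (eT + eN1 * C0 * 0)) by ring.
      apply (is_derive_scal A s al _ X). }
    exact (loc_eq a b Cq (fun t => al * A t) s _ _ Hs CqA (dC s Hs) dA'). }
  assert (Dc : forall s, in_I a b s -> D s = al * eT * en1 / C2).
  { intros s Hs. rewrite <- (DC s Hs).
    transitivity ((en1*en1) * (C2 * / C2) * D s);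
      [rewrite en12, Rinv_r; [ring|exact H2] | field; exact H2]. }
  assert (Cz : forall s, in_I a b s -> Cq s = 0).
  { intros s Hs.
    assert (E := loc_c a b D _ s _ Hs Dc (dD s Hs)).
    simpl in E. assert (en2 <> 0) by (destruct sn2 as [-> | ->]; lra).
    apply (Rmult_eq_reg_l (- en2 * C2)); [|apply Rmult_integral_contrapositive; split; lra].
    rewrite E; ring. }
  destruct (exI a b Hab) as [s Hs].
  assert (E := loc_c a b Cq 0 s _ Hs Cz (dC s Hs)).
  simpl in E. rewrite DC in E by exact Hs.
  unfold al in E.
  assert (en1 <> 0) by (destruct sn1 as [-> | ->]; lra).
  assert (et <> 0) by (destruct st as [-> | ->]; lra).
  assert (eN1 <> 0) by (destruct sN1 as [-> | ->]; lra).
  assert (eT <> 0) by (destruct sT as [-> | ->]; lra).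
  assert (Hz : en1 * et * eN1 * C0 * eT = 0).
  { replace (en1 * et * eN1 * C0 * eT) with (en1 * et * eN1 * C0 / C1 * eT * C1) by (field; exact H1).
    rewrite E; ring. }
  repeat (apply Rmult_integral in Hz; destruct Hz as [Hz|Hz]); contradiction.
Qed.
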